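(* Let $n\ge4$. The number of friendship parking functions for the cycle graph $C_n$ is $$|\mathrm{FPF}(C_n)| = n+1+\sum_{i=1}^{n-2}(i+1)(i+2)+\sum_{i=1}^{3}(n+1-i)!\,(i-1)!+\sum_{i=4}^{n}\frac{(n-i+1)!\,i!}{3}.$$
   Context: $C_n$ is the cycle graph with vertex set $[n]=\{1,\dots,n\}$ and edges $\{i,i+1\}$ for $i\in[n-1]$ and $\{n,1\}$. Friendship parking process for a graph $G$ on $[n]$ and a parking preference $p\in[n]^n$: cars $1,\dots,n$ enter in order into spots $1,\dots,n$ (initially empty); spot $k$ is available for car $i$ if it is unoccupied when $i$ enters and each of spots $k-1,k+1$ is unoccupied or occupied by a car adjacent to $i$ in $G$ (spots $0,n+1$ count as unoccupied); car $i$ parks in the first available spot $k\ge p_i$, and fails to park if there is none. $\mathrm{FPF}(G)$ is the set of parking preferences for which all $n$ cars park. *)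

(* Defs.v *)
From mathcomp Require Import all_boot.
Set Implicit Arguments. Unset Strict Implicit. Unset Printing Implicit Defensive.

(* Cars and spots are numbered 1..n.  A graph G on [n] is a relation on nat
   (only its values on 1..n matter).  A parking state is a sequence [occ] of
   length n: spot k (1 <= k <= n) is stored at index k-1, with value None
   (unoccupied) or Some c (occupied by car c). *)

Definition cycle_adj (n : nat) : rel nat := fun i j =>
  [&& 1 <= i <= n, 1 <= j <= n &
   [|| j == i.+1, i == j.+1, (i == n) && (j == 1) | (i == 1) && (j == n)]].

Definition spot_ok (G : rel nat) (n : nat) (occ : seq (option nat)) (i j : nat) : bool :=
  [|| j == 0, j == n.+1 |
      match nth None occ j.-1 with None => true | Some c => G i c end].

Definition available (G : rel nat) (n : nat) (occ : seq (option nat)) (i k : nat) : bool :=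
  [&& 1 <= k <= n, nth None occ k.-1 == None,
      spot_ok G n occ i k.-1 & spot_ok G n occ i k.+1].

Definition park_car (G : rel nat) (n : nat) (occ : seq (option nat)) (i pi : nat)
  : option (seq (option nat)) :=
  match ohead [seq k <- iota pi (n.+1 - pi) | available G n occ i k] with
  | Some k => Some (set_nth None occ k.-1 (Some i))
  | None => None
  end.

Definition run_parking (G : rel nat) (n : nat) (pref : nat -> nat) : option (seq (option nat)) :=
  foldl (fun o i => obind (fun occ => park_car G n occ i (pref i)) o)
        (Some (nseq n None)) (iota 1 n).

Definition all_park (G : rel nat) (n : nat) (pref : nat -> nat) : bool :=
  run_parking G n pref != None.

(* A parking preference p in [n]^n is encoded as p : n.-tuple 'I_n, the
   preference of car i (1 <= i <= n) being (p_{i-1} : nat) + 1. *)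
Definition pref_of (n : nat) (p : n.-tuple 'I_n) : nat -> nat :=
  fun i => (nth 0 (map val p) i.-1).+1.

Definition FPF (G : rel nat) (n : nat) : {set n.-tuple 'I_n} :=
  [set p : n.-tuple 'I_n | all_park G n (pref_of p)].

(* Main.v *)
Require Import Defs.
From mathcomp Require Import all_boot zify.
Set Implicit Arguments. Unset Strict Implicit. Unset Printing Implicit Defensive.


Fixpoint go (G : rel nat) (n : nat) (occ : seq (option nat)) (i : nat) (s : seq nat)
  : option (seq (option nat)) :=
  match s with
  | [::] => Some occ
  | q :: s' => match park_car G n occ i q with
               | Some o => go G n o i.+1 s'
               | None => None end
  end.

Lemma foldl_None G n P l :
  foldl (fun o i => obind (fun occ => park_car G n occ i (P i)) o) None l = None.
Proof. by elim: l. Qed.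

Lemma foldl_go G n P m : forall occ i,
  foldl (fun o i => obind (fun occ => park_car G n occ i (P i)) o) (Some occ) (iota i m)
  = go G n occ i [seq P j | j <- iota i m].
Proof.
elim: m => [//|m IH] occ i /=.
case: (park_car G n occ i (P i)) => [o|] /=; first exact: IH.
exact: foldl_None.
Qed.

Lemma run_go G n (p : n.-tuple 'I_n) :
  run_parking G n (pref_of p) = go G n (nseq n None) 1 [seq (val x).+1 | x <- p].
Proof.
rewrite /run_parking foldl_go; congr go.
rewrite -(addn0 1) iotaDl -map_comp /pref_of /=.
have -> : [seq (val x).+1 | x <- p] = map succn (map val p) by rewrite -map_comp.
rewrite -[in RHS](mkseq_nth 0 (map val p)) size_map size_tuple /mkseq -map_comp.
by apply: eq_map => k.
Qed.

Lemma sum_tuple_cons (T : finType) m (F : m.+1.-tuple T -> nat) :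
  \sum_(t : m.+1.-tuple T) F t = \sum_(x : T) \sum_(t : m.-tuple T) F [tuple of x :: t].
Proof.
rewrite pair_big /=.
pose h (p : T * m.-tuple T) : m.+1.-tuple T := [tuple of p.1 :: p.2].
rewrite (reindex h) //=.
exists (fun t : m.+1.-tuple T => (thead t, [tuple of behead t])) => [[x t]|t] _ /=.
  by congr pair; apply: val_inj.
by apply: val_inj; rewrite /= [t in RHS](tuple_eta t).
Qed.

Lemma sum_tuple0 (T : finType) (F : 0.-tuple T -> nat) :
  \sum_(t : 0.-tuple T) F t = F [tuple].
Proof. rewrite (big_pred1 [tuple]) // => t; rewrite /pred1 /=; symmetry; apply/eqP. by case: t => -[] // ?; apply/val_eqP. Qed.

Definition sv n (x : 'I_n) := (val x).+1.

Lemma card_FPF n :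
  #|FPF (cycle_adj n) n| =
  \sum_(t : n.-tuple 'I_n) (go (cycle_adj n) n (nseq n None) 1 (map (@sv n) t) != None : nat).
Proof.
rewrite /FPF cardsE -sum1_card big_mkcond /=.
apply: eq_bigr => t _; rewrite unfold_in /all_park run_go.
by case: (go _ _ _ _ _).
Qed.


Definition restr (j : nat) (f : seq (option nat)) : seq (option nat) :=
  [seq (if o is Some c then (if c < j then Some c else None) else None) | o <- f].

Lemma nth_restr j f k : nth None (restr j f) k =
  if nth None f k is Some c then (if c < j then Some c else None) else None.
Proof.
case: (ltnP k (size f)) => hk; first by rewrite (nth_map None).
by rewrite !nth_default ?size_map.
Qed.

Lemma size_restr j f : size (restr j f) = size f.
Proof. by rewrite size_map. Qed.

Lemma restr_restr j j' f : j <= j' -> restr j (restr j' f) = restr j f.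
Proof.
move=> hj; rewrite /restr -map_comp; apply: eq_map => -[c|] //=.
by case: (ltnP c j') => hc /=; case: (ltnP c j) => hc' //; lia.
Qed.

Lemma restr_id j f : (forall k c, nth None f k = Some c -> c < j) -> restr j f = f.
Proof.
move=> H; apply: (@eq_from_nth _ None); rewrite ?size_restr // => k hk.
rewrite nth_restr; case E: (nth None f k) => [c|] //.
by rewrite (H _ _ E).
Qed.

Lemma ohead_mem (T : eqType) (s : seq T) k : ohead s = Some k -> k \in s.
Proof. by case: s => //= x s [->]; rewrite mem_head. Qed.

Lemma park_spec G n occ i q o : park_car G n occ i q = Some o ->
  exists k, [/\ available G n occ i k, q <= k & o = set_nth None occ k.-1 (Some i)].
Proof.
rewrite /park_car; case E: ohead => [k|] // [<-].
move: (ohead_mem E); rewrite mem_filter mem_iota => /andP [hav hk].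
exists k; split => //; lia.
Qed.

Lemma restr_set j o k : k < size o -> nth None o k = None ->
  (forall k c, nth None o k = Some c -> c < j) ->
  restr j (set_nth None o k (Some j)) = o.
Proof.
move=> hk hn H; apply: (@eq_from_nth _ None).
  by rewrite size_restr size_set_nth; lia.
move=> m _; rewrite nth_restr nth_set_nth /=.
case: eqP => [->|_]; first by rewrite ltnn hn.
by case E: (nth None o m) => [c|] //; rewrite (H _ _ E).
Qed.

Lemma go_restr n s : forall j o f, size o = n ->
  (forall k c, nth None o k = Some c -> c < j) ->
  go (cycle_adj n) n o j s = Some f -> restr j f = o.
Proof.
elim: s => [|q s IH] j o f hs H /=; first by case=> <-; exact: restr_id.
case E: park_car => [o'|] // Hgo.
have [k [hav hq Ho']] := park_spec E; subst o'.
move: hav; rewrite /available => /and4P [hk /eqP hn _ _].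
have hk' : k.-1 < size o by lia.
have := IH j.+1 _ _ _ _ Hgo; rewrite size_set_nth.
have -> : maxn k.-1.+1 (size o) = n by lia.
move=> /(_ erefl) IH'.
rewrite -(restr_restr f (leqnSn j)) IH'.
- exact: restr_set.
- move=> m c; rewrite nth_set_nth /=; case: eqP => [_ [<-]//|_].
  by move/H; lia.
Qed.


Lemma cycle_adj_sym n a b : cycle_adj n a b = cycle_adj n b a.
Proof. rewrite /cycle_adj; apply/idP/idP; lia. Qed.

Definition Inv n (j : nat) (occ : seq (option nat)) :=
 [/\ size occ = n,
     forall k c, nth None occ k = Some c -> 0 < c < j,
     forall k1 k2 c, nth None occ k1 = Some c -> nth None occ k2 = Some c -> k1 = k2,
     forall k a b, nth None occ k = Some a -> nth None occ k.+1 = Some b -> cycle_adj n a b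
   & count (pred1 None) occ + j = n.+1].

Lemma Inv0 n : Inv n 1 (nseq n None).
Proof.
split.
- by rewrite size_nseq.
- by move=> k c; rewrite nth_nseq; case: ifP.
- by move=> k1 k2 c; rewrite nth_nseq; case: ifP.
- by move=> k a b; rewrite nth_nseq; case: ifP.
- by rewrite count_nseq /= mul1n addn1.
Qed.

Lemma Inv_park n j occ q o : Inv n j occ -> 0 < j <= n ->
  park_car (cycle_adj n) n occ j q = Some o -> Inv n j.+1 o.
Proof.
move=> [hs hv hi ha hc] hj E.
have [k [hav hq Ho]] := park_spec E; subst o.
move: hav; rewrite /available => /and4P [hk /eqP hn ok1 ok2].
have hk' : k.-1 < size occ by lia.
split.
- rewrite size_set_nth; lia.
- move=> m c; rewrite nth_set_nth /=; case: eqP => [_ [hc']|_]; first lia.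
  by move/hv; lia.
- move=> k1 k2 c; rewrite !nth_set_nth /=.
  case: eqP => [->|h1]; case: eqP => [->|h2] //.
  + by move=> [<-] /hv; lia.
  + by move=> /hv h [hc']; lia.
  + exact: hi.
- move=> m a b; rewrite !nth_set_nth /=.
  case: eqP => [h1|h1]; case: eqP => [h2|h2].
  + lia.
  + move=> [<-] hb; move: ok2; rewrite /spot_ok.
    have -> : k.+1.-1 = m.+1 by lia.
    rewrite hb; case/or3P => [//|/eqP hkn|//].
    exfalso; move: hb; rewrite nth_default //; lia.
  + move=> ha' [<-]; move: ok1; rewrite /spot_ok.
    have -> : k.-1.-1 = m by lia.
    rewrite ha' cycle_adj_sym; case/or3P => //; lia.
  + exact: ha.
- rewrite count_set_nth_ltn // hn /=.
  have : 0 < count (pred1 None) occ.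
    by rewrite -has_count; apply/hasP; exists None => //; rewrite -hn mem_nth.
  have aux : forall x, 0 < x -> x + j = n.+1 -> x + 0 - 1 + j.+1 = n.+1 by lia.
  by move=> h; apply: aux.
Qed.

Lemma Inv_go n s : forall j occ f, Inv n j occ -> 0 < j -> j + size s <= n.+1 ->
  go (cycle_adj n) n occ j s = Some f -> Inv n (j + size s) f.
Proof.
elim: s => [|q s IH] j occ f hI hj0 hj /=; first by case=> <-; rewrite addn0.
case E: park_car => [o|] // Hgo.
have hI' : Inv n j.+1 o by apply: (Inv_park hI _ E); move: hj => /=; lia.
have := IH j.+1 o f hI' (ltn0Sn _); rewrite addSnnS; apply => //; move: hj => /=; lia.
Qed.

Lemma Inv_full n f : Inv n n.+1 f -> forall k, k < n -> exists c, nth None f k = Some c.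
Proof.
move=> [hs _ _ _ hc] k hk.
case E: (nth None f k) => [c|]; first by exists c.
have : 0 < count (pred1 None) f.
  by rewrite -has_count; apply/hasP; exists None => //; rewrite -E mem_nth // hs.
have aux : forall x, 0 < x -> x + n.+1 = n.+1 -> False by lia.
by move=> h; exfalso; apply: aux h hc.
Qed.


Definition cwF n a k := if k + a <= n.+1 then k + a - 1 else k + a - 1 - n.
Definition ccwF n b k := if k <= b then b.+1 - k else b + n.+1 - k.
Definition seqF n (F : nat -> nat) := mkseq (fun i => Some (F i.+1)) n.

Lemma cwF_spec n a k : (k + a <= n.+1 /\ cwF n a k = k + a - 1) \/
                       (n.+1 < k + a /\ cwF n a k = k + a - 1 - n).
Proof. rewrite /cwF; case: ifP => h; [left|right]; split => //; lia. Qed.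

Lemma ccwF_spec n b k : (k <= b /\ ccwF n b k = b.+1 - k) \/
                        (b < k /\ ccwF n b k = b + n.+1 - k).
Proof. rewrite /ccwF; case: ifP => h; [left|right]; split => //; lia. Qed.

Lemma nth_seqF n F i : nth None (seqF n F) i = if i < n then Some (F i.+1) else None.
Proof.
case: ltnP => h; first by rewrite nth_mkseq.
by rewrite nth_default // size_mkseq.
Qed.

Lemma size_seqF n F : size (seqF n F) = n.
Proof. exact: size_mkseq. Qed.

Lemma path_follow n f F : Inv n n.+1 f ->
  (forall m c, m.+3 <= n -> cycle_adj n (F m.+2) c -> c <> F m.+1 -> 0 < c <= n ->
      c = F m.+3) ->
  nth None f 0 = Some (F 1) -> (1 < n -> nth None f 1 = Some (F 2)) ->
  forall k, k < n -> nth None f k = Some (F k.+1).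
Proof.
move=> hI hN h0 h1.
have [hs hv hi ha hc] := hI.
suff: forall k, k.+1 < n -> nth None f k = Some (F k.+1) /\ nth None f k.+1 = Some (F k.+2).
  move=> H k hk; case: k hk => [|k] hk; first exact: h0.
  by have [] := H k hk.
elim=> [|k IH] hk; first by split => //; apply: h1.
have [e1 e2] := IH (ltnW hk); split => //.
have [c hc'] := Inv_full hI hk.
rewrite hc'; congr Some; apply: hN.
- lia.
- exact: (ha _ _ _ e2 hc').
- by move=> ec; subst c; have := hi _ _ _ e1 hc'; lia.
- by have := hv _ _ hc'; lia.
Qed.

Lemma cw_nb n a : 3 <= n -> 0 < a <= n -> forall m c, m.+3 <= n ->
  cycle_adj n (cwF n a m.+2) c -> c <> cwF n a m.+1 -> 0 < c <= n -> c = cwF n a m.+3.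
Proof.
move=> hn ha m c hm; rewrite /cycle_adj.
have := cwF_spec n a m.+1; have := cwF_spec n a m.+2; have := cwF_spec n a m.+3.
lia.
Qed.

Lemma ccw_nb n a : 3 <= n -> 0 < a <= n -> forall m c, m.+3 <= n ->
  cycle_adj n (ccwF n a m.+2) c -> c <> ccwF n a m.+1 -> 0 < c <= n -> c = ccwF n a m.+3.
Proof.
move=> hn ha m c hm; rewrite /cycle_adj.
have := ccwF_spec n a m.+1; have := ccwF_spec n a m.+2; have := ccwF_spec n a m.+3.
lia.
Qed.

Lemma classify n f : 3 <= n -> Inv n n.+1 f ->
  exists a, 0 < a <= n /\ (f = seqF n (cwF n a) \/ f = seqF n (ccwF n a)).
Proof.
move=> hn hI; have [hs hv hi ha hc] := hI.
have h0 : 0 < n by lia.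
have h1 : 1 < n by lia.
have [a ea] := Inv_full hI h0.
have [b eb] := Inv_full hI h1.
have hab := ha _ _ _ ea eb.
have hra := hv _ _ ea; have hrb := hv _ _ eb.
have har : 0 < a <= n by lia.
exists a; split; first lia.
have cwa1 : cwF n a 1 = a by rewrite /cwF; case: ifP; lia.
have ccwa1 : ccwF n a 1 = a by rewrite /ccwF; case: ifP; lia.
move: hab; rewrite /cycle_adj => hab.
have [hcw|hccw] : b = cwF n a 2 \/ b = ccwF n a 2.
  have := cwF_spec n a 2; have := ccwF_spec n a 2; lia.
- left; apply: (@eq_from_nth _ None); rewrite ?size_seqF // hs => k hk.
  rewrite nth_seqF hk.
  apply: (path_follow hI (cw_nb hn har)) => //.
  + by rewrite cwa1.
  + by rewrite -hcw.
- right; apply: (@eq_from_nth _ None); rewrite ?size_seqF // hs => k hk.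
  rewrite nth_seqF hk.
  apply: (path_follow hI (ccw_nb hn har)) => //.
  + by rewrite ccwa1.
  + by rewrite -hccw.
Qed.


Definition wj n f j :=
  \sum_(x : 'I_n) (park_car (cycle_adj n) n (restr j f) j (sv x) == Some (restr j.+1 f) : nat).

Lemma restr_vals j f k c : nth None (restr j f) k = Some c -> c < j.
Proof. by rewrite nth_restr; case: (nth None f k) => // c'; case: ifP => // h [<-]. Qed.

Lemma go_step n f i q s : size f = n ->
  (go (cycle_adj n) n (restr i f) i (q :: s) == Some f : nat) =
  (park_car (cycle_adj n) n (restr i f) i q == Some (restr i.+1 f)) *
  (go (cycle_adj n) n (restr i.+1 f) i.+1 s == Some f).
Proof.
move=> hs /=; case E: park_car => [o|] //=.
have [k [hav hq Ho]] := park_spec E.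
move: hav; rewrite /available => /and4P [hk /eqP hn _ _].
case: (eqVneq (go (cycle_adj n) n o i.+1 s) (Some f)) => Hg.
- have ho : restr i.+1 f = o.
    apply: (go_restr _ _ Hg).
    + by rewrite Ho size_set_nth size_restr; lia.
    + move=> m c; rewrite Ho nth_set_nth /=; case: eqP => [_ [<-]//|_].
      by move/restr_vals; lia.
  by rewrite -ho in Hg *; rewrite Hg !eqxx.
- case: eqP => [[ho]|] //=. rewrite -ho (negbTE Hg) /=. by rewrite muln0.
Qed.

Lemma Wprod n f : size f = n -> (forall k c, nth None f k = Some c -> c < n.+1) ->
  forall m i, i + m = n.+1 ->
  \sum_(t : m.-tuple 'I_n) (go (cycle_adj n) n (restr i f) i (map (@sv n) t) == Some f : nat)
  = \prod_(i <= j < n.+1) wj n f j.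
Proof.
move=> hs hv; elim=> [|m IH] i hi.
  rewrite sum_tuple0 /= big_geq; last lia.
  rewrite addn0 in hi; subst i.
  by rewrite restr_id // eqxx.
rewrite sum_tuple_cons big_ltn; last lia.
rewrite -(IH i.+1); last lia.
rewrite /wj big_distrl /=; apply: eq_bigr => x _.
rewrite big_distrr /=; apply: eq_bigr => t _.
exact: go_step.
Qed.


Lemma ohead_filter_iota (A : pred nat) m : forall q s,
  ohead [seq k <- iota q m | A k] = Some s <->
  [/\ q <= s < q + m, A s & forall k, q <= k < s -> ~~ A k].
Proof.
elim: m => [|m IH] q s /=.
  split => //; case; lia.
case: ifP => hq /=.
  split.
    by case=> <-; split => //; [lia | move=> k; lia].
  case=> h1 h2 h3; case: (ltngtP q s) => e; [| lia | by rewrite e].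
  by move: (h3 q); rewrite hq; lia.
rewrite IH; split.
  case=> h1 h2 h3; split => //; first lia.
  move=> k hk; case: (eqVneq k q) => [->|ne]; first by rewrite hq.
  apply: h3; lia.
case=> h1 h2 h3; split => //.
- case: (eqVneq q s) => e; first by subst; rewrite hq in h2.
  lia.
- move=> k hk; apply: h3; lia.
Qed.

Lemma sum_range n L s : s <= n -> L <= s ->
  \sum_(x < n) (L <= x < s : nat) = s - L.
Proof.
move=> hs hL.
suff: forall m, \sum_(x < m) (L <= x < s : nat) = minn m s - minn m L.
  by move=> ->; lia.
elim=> [|m IH]; first by rewrite big_ord0; lia.
rewrite big_ord_recr /= IH; case: (leqP L m) => h1; case: (ltnP m s) => h2 /=; lia.
Qed.

Lemma count_first (A : pred nat) n s L : 0 < s <= n -> A s -> L < s ->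
  (L = 0 \/ A L) -> (forall k, L < k < s -> ~~ A k) ->
  \sum_(x : 'I_n) (ohead [seq k <- iota (sv x) (n.+1 - sv x) | A k] == Some s : nat)
  = s - L.
Proof.
move=> hs hA hL hL' hk.
rewrite -(sum_range (n:=n) (_ : s <= n)) ?(ltnW hL) //; last lia.
apply: eq_bigr => -[x hx] _; rewrite /sv /=.
case: (boolP (L <= x < s)) => hx'.
  suff -> : ohead [seq k <- iota x.+1 (n.+1 - x.+1) | A k] = Some s by rewrite eqxx.
  apply/ohead_filter_iota; split => //; first lia.
  move=> k hk'; apply: hk; lia.
case: eqP => // /ohead_filter_iota [h1 h2 h3].
case: (leqP s x) => h4; first lia.
case: hL' => e; first lia.
have : L < s by [].
have := h3 L; rewrite e.
move=> h5 _; have : x.+1 <= L < s by lia.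
by move/h5.
Qed.

Lemma nth_rsF n F j m : nth None (restr j (seqF n F)) m =
  if (m < n) && (F m.+1 < j) then Some (F m.+1) else None.
Proof. by rewrite nth_restr nth_seqF; case: ifP => //= _; case: ifP. Qed.

Lemma wj_first n F j s :
  (forall k1 k2, 0 < k1 <= n -> 0 < k2 <= n -> F k1 = F k2 -> k1 = k2) ->
  0 < s <= n -> F s = j ->
  wj n (seqF n F) j = \sum_(x : 'I_n)
    (ohead [seq k <- iota (sv x) (n.+1 - sv x) |
            available (cycle_adj n) n (restr j (seqF n F)) j k] == Some s : nat).
Proof.
move=> hinj hs hFs; apply: eq_bigr => x _; rewrite /park_car.
case E: ohead => [k|] //=.
move: (ohead_mem E); rewrite mem_filter => /andP [hav _].
move: hav; rewrite /available => /and4P [hk /eqP hn _ _].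
case: (eqVneq k s) => [ek|nek].
  subst k.
  suff -> : set_nth None (restr j (seqF n F)) s.-1 (Some j) = restr j.+1 (seqF n F)
    by rewrite !eqxx.
  apply: (@eq_from_nth _ None).
    by rewrite size_set_nth !size_restr !size_seqF; lia.
  move=> m _; rewrite nth_set_nth /= !nth_rsF.
  case: eqP => [em|nem].
    by rewrite em (_ : s.-1 < n) 1?(_ : s.-1.+1 = s) //= ?hFs ?ltnSn //; lia.
  case: (ltnP m n) => hm //=.
  case: (ltnP (F m.+1) j) => h1; case: (ltnP (F m.+1) j.+1) => h2 //; try lia.
  have : F m.+1 = F s by lia.
  move/hinj; lia.
have -> : (Some k == Some s) = false by apply/eqP => -[ek]; rewrite ek eqxx in nek.
case: eqP => // -[] heq; have := congr1 (fun l => nth None l k.-1) heq => /=.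
rewrite nth_set_nth /= eqxx nth_rsF.
case: ifP => // /andP [h1 h2] [hj].
have ek : k.-1.+1 = k by lia. rewrite ek in hj. have : F k = F s by rewrite hFs hj.
move/hinj; lia.
Qed.


Definition adjP n i c :=
  0 < i <= n /\ 0 < c <= n /\
   (c = i.+1 \/ i = c.+1 \/ (i = n /\ c = 1) \/ (i = 1 /\ c = n)).

Lemma adjP_E n i c : cycle_adj n i c <-> adjP n i c.
Proof. rewrite /cycle_adj /adjP; split; lia. Qed.

Lemma avail_spec n F j k :
  available (cycle_adj n) n (restr j (seqF n F)) j k <->
  0 < k <= n /\ j <= F k /\
      (k = 1 \/ j <= F k.-1 \/ adjP n j (F k.-1)) /\
      (k = n \/ j <= F k.+1 \/ adjP n j (F k.+1)).
Proof.
rewrite /available /spot_ok !nth_rsF /adjP /cycle_adj.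
case: k => [|[|k]] /=; repeat (case: ifP => ? /=); split; lia.
Qed.

Definition AV n F j k :=
  0 < k <= n /\ j <= F k /\
      (k = 1 \/ j <= F k.-1 \/ adjP n j (F k.-1)) /\
      (k = n \/ j <= F k.+1 \/ adjP n j (F k.+1)).

Lemma wj_eq n F j s L :
  (forall k1 k2, 0 < k1 <= n -> 0 < k2 <= n -> F k1 = F k2 -> k1 = k2) ->
  0 < s <= n -> F s = j -> AV n F j s -> L < s -> (L = 0 \/ AV n F j L) ->
  (forall k, L < k < s -> ~ AV n F j k) ->
  wj n (seqF n F) j = s - L.
Proof.
move=> hinj hs hFs hAs hL hL' hk.
rewrite (wj_first hinj hs hFs); apply: count_first => //.
- by apply/avail_spec.
- by case: hL' => [->|h]; [left|right; apply/avail_spec].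
- by move=> k hk'; apply/negP => /avail_spec; apply: hk.
Qed.

Definition wcw a j := if j < a then (if j == 1 then 1 else if j == 2 then 2 else j.+1)
                      else j - a + 1.

Lemma cwF_lo n a k : k + a <= n.+1 -> cwF n a k = k + a - 1.
Proof. by rewrite /cwF => ->. Qed.
Lemma cwF_hi n a k : n.+1 < k + a -> cwF n a k = k + a - 1 - n.
Proof. rewrite /cwF; case: ifP => //; lia. Qed.

Ltac fcw n a x := case: (leqP (x + a) n.+1) => ?;
  [rewrite (@cwF_lo n a x) // | rewrite (@cwF_hi n a x) //].
Ltac occw n a k := move=> [_ [+ _]]; fcw n a k; lia.

Lemma wj_cw n a j : 4 <= n -> 0 < a <= n -> 0 < j <= n ->
  wj n (seqF n (cwF n a)) j = wcw a j.
Proof.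
move=> hn ha hj.
have hinj : forall k1 k2, 0 < k1 <= n -> 0 < k2 <= n -> cwF n a k1 = cwF n a k2 -> k1 = k2.
  by move=> k1 k2 ? ?; fcw n a k1; fcw n a k2; lia.
rewrite /wcw; case: (ltnP j a) => haj.
- case: (eqVneq j 1) => [e1|n1].
  + subst j; rewrite (wj_eq (s := n - a + 2) (L := n - a + 1) hinj).
    * lia.
    * lia.
    * fcw n a (n - a + 2); lia.
    * split; first lia. split; first (fcw n a (n - a + 2); lia).
      split; [right; left; fcw n a (n - a + 2).-1; lia|].
      case: (eqVneq (n - a + 2) n) => e; [by left|right; left; fcw n a (n - a + 2).+1; lia].
    * lia.
    * right; split; first lia. split; first (fcw n a (n - a + 1); lia).
      split; [case: (eqVneq (n - a + 1) 1) => e; [by left|right; left; fcw n a (n - a + 1).-1; lia]|].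
      right; left; fcw n a (n - a + 1).+1; lia.
    * move=> k hk; lia.
  case: (eqVneq j 2) => [e2|n2].
  + subst j; rewrite (wj_eq (s := n - a + 3) (L := n - a + 1) hinj).
    * lia.
    * lia.
    * fcw n a (n - a + 3); lia.
    * split; first lia. split; first (fcw n a (n - a + 3); lia).
      split; [right; right; rewrite /adjP; fcw n a (n - a + 3).-1; lia|].
      case: (eqVneq (n - a + 3) n) => e; [by left|right; left; fcw n a (n - a + 3).+1; lia].
    * lia.
    * right; split; first lia. split; first (fcw n a (n - a + 1); lia).
      split; [case: (eqVneq (n - a + 1) 1) => e; [by left|right; left; fcw n a (n - a + 1).-1; lia]|].
      right; right; rewrite /adjP; fcw n a (n - a + 1).+1; lia.
    * move=> k hk; have -> : k = n - a + 2 by lia. occw n a (n - a + 2).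
  + rewrite (wj_eq (s := j + n + 1 - a) (L := n - a) hinj).
    * lia.
    * lia.
    * fcw n a (j + n + 1 - a); lia.
    * split; first lia. split; first (fcw n a (j + n + 1 - a); lia).
      split; [right; right; rewrite /adjP; fcw n a (j + n + 1 - a).-1; lia|].
      case: (eqVneq (j + n + 1 - a) n) => e; [by left|right; left; fcw n a (j + n + 1 - a).+1; lia].
    * lia.
    * case: (eqVneq a n) => e; [left; lia | right].
      split; first lia. split; first (fcw n a (n - a); lia).
      split; [case: (eqVneq (n - a) 1) => e'; [by left|right; left; fcw n a (n - a).-1; lia]|].
      right; left; fcw n a (n - a).+1; lia.
    * move=> k hk; case: (eqVneq k (n - a + 1)) => ek.
      - subst k; move=> [_ [_ [_ h]]]; move: h.
        fcw n a (n - a + 1).+1; rewrite /adjP; lia.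
      - occw n a k.
- rewrite (wj_eq (s := j - a + 1) (L := 0) hinj).
  * lia.
  * lia.
  * fcw n a (j - a + 1); lia.
  * split; first lia. split; first (fcw n a (j - a + 1); lia).
    split; [case: (eqVneq (j - a + 1) 1) => e; [by left|right; right; rewrite /adjP; fcw n a (j - a + 1).-1; lia]|].
    case: (eqVneq (j - a + 1) n) => e; [by left|right].
    case: (ltnP j n) => hjn; [left; fcw n a (j - a + 1).+1; lia | right; rewrite /adjP; fcw n a (j - a + 1).+1; lia].
  * lia.
  * by left.
  * move=> k hk; occw n a k.
Qed.

Definition wcc n b j := if j <= b then 1 else if j == n then b.+1
                        else if j == n.-1 then b.+2 else 1.

Lemma ccwF_lo n b k : k <= b -> ccwF n b k = b.+1 - k.
Proof. by rewrite /ccwF => ->. Qed.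
Lemma ccwF_hi n b k : b < k -> ccwF n b k = b + n.+1 - k.
Proof. rewrite /ccwF; case: ifP => //; lia. Qed.

Ltac fcc n b x := case: (leqP x b) => ?;
  [rewrite (@ccwF_lo n b x) // | rewrite (@ccwF_hi n b x) //].
Ltac occc n b k := move=> [_ [+ _]]; fcc n b k; lia.

Lemma wj_ccw n b j : 4 <= n -> 0 < b <= n -> 0 < j <= n ->
  wj n (seqF n (ccwF n b)) j = wcc n b j.
Proof.
move=> hn hb hj.
have hinj : forall k1 k2, 0 < k1 <= n -> 0 < k2 <= n -> ccwF n b k1 = ccwF n b k2 -> k1 = k2.
  by move=> k1 k2 ? ?; fcc n b k1; fcc n b k2; lia.
rewrite /wcc; case: (leqP j b) => hjb.
- rewrite (wj_eq (s := b.+1 - j) (L := b - j) hinj).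
  * lia.
  * lia.
  * fcc n b (b.+1 - j); lia.
  * split; first lia. split; first (fcc n b (b.+1 - j); lia).
    split; [case: (eqVneq (b.+1 - j) 1) => e; [by left|right; left; fcc n b (b.+1 - j).-1; lia]|].
    case: (eqVneq (b.+1 - j) n) => e; [by left|right].
    case: (eqVneq j 1) => e1; [left; fcc n b (b.+1 - j).+1; lia | right; rewrite /adjP; fcc n b (b.+1 - j).+1; lia].
  * lia.
  * case: (eqVneq j b) => e; [left; lia | right].
    split; first lia. split; first (fcc n b (b - j); lia).
    split; [case: (eqVneq (b - j) 1) => e'; [by left|right; left; fcc n b (b - j).-1; lia]|].
    right; left; fcc n b (b - j).+1; lia.
  * move=> k hk; lia.
case: (eqVneq j n) => [en|nen].
- subst j; rewrite (wj_eq (s := b.+1) (L := 0) hinj).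
  * lia.
  * lia.
  * fcc n b b.+1; lia.
  * split; first lia. split; first (fcc n b b.+1; lia).
    split; [right; right; rewrite /adjP; fcc n b b.+1.-1; lia|].
    case: (eqVneq b.+1 n) => e; [by left|right; right; rewrite /adjP; fcc n b b.+2; lia].
  * lia.
  * by left.
  * move=> k hk; occc n b k.
case: (eqVneq j n.-1) => [en|nen1].
- subst j; rewrite (wj_eq (s := b.+2) (L := 0) hinj).
  * lia.
  * lia.
  * fcc n b b.+2; lia.
  * split; first lia. split; first (fcc n b b.+2; lia).
    split; [right; left; fcc n b b.+2.-1; lia|].
    case: (eqVneq b.+2 n) => e; [by left|right; right; rewrite /adjP; fcc n b b.+3; lia].
  * lia.
  * by left.
  * move=> k hk; case: (eqVneq k b.+1) => ek.
    - subst k; move=> [_ [_ [+ _]]].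
      fcc n b b.+1.-1; rewrite /adjP; lia.
    - occc n b k.
- rewrite (wj_eq (s := b + n.+1 - j) (L := b + n - j) hinj).
  * lia.
  * lia.
  * fcc n b (b + n.+1 - j); lia.
  * split; first lia. split; first (fcc n b (b + n.+1 - j); lia).
    split; [right; left; fcc n b (b + n.+1 - j).-1; lia|].
    case: (eqVneq (b + n.+1 - j) n) => e; [by left|right; right; rewrite /adjP; fcc n b (b + n.+1 - j).+1; lia].
  * lia.
  * right; split; first lia. split; first (fcc n b (b + n - j); lia).
    split; [right; left; fcc n b (b + n - j).-1; lia|].
    right; left; fcc n b (b + n - j).+1; lia.
  * move=> k hk; lia.
Qed.


Lemma sum_nat_eqx lo hi x : \sum_(lo <= a < hi) (a == x : nat) = (lo <= x < hi).
Proof.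
elim: hi => [|hi IH]; first by rewrite big_geq //; case: (lo <= x) => //.
case: (leqP lo hi) => h.
  rewrite big_nat_recr //= IH.
  case: (eqVneq hi x) => [e|ne]; case: (leqP lo x) => h1; case: (ltnP x hi) => h2;
    case: (ltnP x hi.+1) => h3 //=; lia.
rewrite big_geq //; case: (leqP lo x) => h' //=; case: (ltnP x hi.+1) => //=; lia.
Qed.

Lemma sum_ind1 (P : nat -> bool) lo hi x : lo <= x < hi ->
  (forall a, lo <= a < hi -> P a = (a == x)) -> \sum_(lo <= a < hi) (P a : nat) = 1.
Proof.
move=> hx hP; rewrite (@eq_big_nat _ _ _ lo hi _ (fun a => (a == x : nat))).
  by rewrite sum_nat_eqx hx.
by move=> a ha; rewrite hP.
Qed.

Lemma sum_ind0 (P : nat -> bool) lo hi :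
  (forall a, lo <= a < hi -> P a = false) -> \sum_(lo <= a < hi) (P a : nat) = 0.
Proof.
move=> hP; rewrite (@eq_big_nat _ _ _ lo hi _ (fun a => 0)); first by rewrite big1.
by move=> a ha; rewrite hP.
Qed.

Lemma nth0_seqF n F : 0 < n -> nth None (seqF n F) 0 = Some (F 1).
Proof. by move=> hn; rewrite nth_seqF hn. Qed.

Lemma seqF_eq n F F' : seqF n F = seqF n F' -> forall k, k < n -> F k.+1 = F' k.+1.
Proof. by move=> e k hk; move: (congr1 (fun l => nth None l k) e); rewrite !nth_seqF hk => -[]. Qed.

Lemma split_run n (t : n.-tuple 'I_n) : 4 <= n ->
  let r := go (cycle_adj n) n (nseq n None) 1 (map (@sv n) t) in
  (r != None : nat) =
  \sum_(1 <= a < n.+1) (r == Some (seqF n (cwF n a)) : nat) +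
  \sum_(1 <= a < n.+1) (r == Some (seqF n (ccwF n a)) : nat).
Proof.
move=> hn r; rewrite /r; case E: go => [f|] /=; last by rewrite !big1.
have hI := Inv_go (Inv0 n) (ltn0Sn 0) _ E.
rewrite size_map size_tuple add1n in hI; have {hI} hI := hI (leqnn _).
have h3 : 3 <= n by lia.
have [a [ha [ef|ef]]] := classify h3 hI; subst f.
- rewrite (@sum_ind1 _ 1 n.+1 a); first last.
  + move=> a' ha'; apply/idP/idP => [/eqP [] e|/eqP ->//].
    have := seqF_eq e (_ : 0 < n); rewrite /cwF; case: ifP; case: ifP; lia.
  + lia.
  rewrite sum_ind0 // => a' ha'; apply/eqP => -[] e.
  have := seqF_eq e (_ : 0 < n); have := seqF_eq e (_ : 1 < n).
  rewrite /cwF /ccwF; case: ifP; case: ifP; case: ifP; case: ifP; lia.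
- rewrite (@sum_ind0 _ 1 n.+1); last first.
    move=> a' ha'; apply/eqP => -[] e.
    have := seqF_eq e (_ : 0 < n); have := seqF_eq e (_ : 1 < n).
    rewrite /cwF /ccwF; case: ifP; case: ifP; case: ifP; case: ifP; lia.
  rewrite (@sum_ind1 _ 1 n.+1 a); [by []|lia|].
  move=> a' ha'; apply/idP/idP => [/eqP [] e|/eqP ->//].
  have := seqF_eq e (_ : 0 < n); rewrite /ccwF; case: ifP; case: ifP; lia.
Qed.


Definition hc j := if j == 1 then 1 else if j == 2 then 2 else j.+1.
Definition H a := \prod_(1 <= j < a) hc j.

Lemma prod_shift a m : \prod_(a <= j < a + m) (j - a + 1) = m`!.
Proof.
elim: m => [|m IH]; first by rewrite addn0 big_geq.
rewrite addnS big_nat_recr /=; last lia.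
by rewrite IH factS mulnC; congr (_ * _); lia.
Qed.

Lemma H3 a : 3 <= a -> 3 * H a = a`!.
Proof.
elim: a => [|a IH] // ha.
case: (ltngtP a 2) => h; first lia.
- rewrite /H big_nat_recr /=; last lia.
  rewrite -/(H a) mulnA IH; last lia.
  rewrite factS mulnC /hc; case: eqP => [?|_]; first lia; case: eqP => [?|_]; first lia; by [].
- by subst a; rewrite /H /index_iota /= !big_cons big_nil.
Qed.

Lemma Pcw n a : 0 < a <= n -> \prod_(1 <= j < n.+1) wcw a j = H a * (n.+1 - a)`!.
Proof.
move=> ha; rewrite (@big_cat_nat _ _ _ a) //=; try lia.
congr (_ * _).
  apply: eq_big_nat => j hj; rewrite /wcw /hc; case: ifP => //; lia.
rewrite -(prod_shift a (n.+1 - a)) (_ : a + (n.+1 - a) = n.+1); last lia.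
apply: eq_big_nat => j hj; rewrite /wcw; case: ifP => //; lia.
Qed.

Lemma Pcc n b : 4 <= n -> 0 < b <= n ->
  \prod_(1 <= j < n.+1) wcc n b j = wcc n b n.-1 * wcc n b n.
Proof.
case: n => [|m] // hn hb /=.
rewrite big_nat_recr /=; last lia.
rewrite big_nat_recr /=; last lia.
rewrite big_nat_cond big1 ?mul1n //.
move=> j /andP [/andP [hj1 hj2] _]; rewrite /wcc; case: ifP => //.
case: ifP; first lia. case: ifP; first (simpl; lia). by [].
Qed.

Lemma split_run' n (t : n.-tuple 'I_n) : 4 <= n ->
  (go (cycle_adj n) n (nseq n None) 1 (map (@sv n) t) != None : nat) =
  \sum_(1 <= a < n.+1) (go (cycle_adj n) n (nseq n None) 1 (map (@sv n) t)
                          == Some (seqF n (cwF n a)) : nat) +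
  \sum_(1 <= a < n.+1) (go (cycle_adj n) n (nseq n None) 1 (map (@sv n) t)
                          == Some (seqF n (ccwF n a)) : nat).
Proof. exact: split_run. Qed.

Lemma W_seqF n F : (forall k, 0 < k <= n -> 0 < F k <= n) ->
  \sum_(t : n.-tuple 'I_n)
     (go (cycle_adj n) n (nseq n None) 1 (map (@sv n) t) == Some (seqF n F) : nat)
  = \prod_(1 <= j < n.+1) wj n (seqF n F) j.
Proof.
move=> hF.
have -> : nseq n None = restr 1 (seqF n F).
  apply: (@eq_from_nth _ None); first by rewrite size_nseq size_restr size_seqF.
  move=> k hk; rewrite nth_nseq nth_rsF; rewrite size_nseq in hk; rewrite hk /=.
  case: ifP => // h; exfalso; have := hF k.+1; lia.
have hv : forall k c, nth None (seqF n F) k = Some c -> c < n.+1.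
  move=> k c; rewrite nth_seqF; case: ifP => // hk [<-]; have := hF k.+1; lia.
exact: (Wprod (size_seqF n F) hv (add1n n)).
Qed.

Lemma cw_range n a : 0 < a <= n -> forall k, 0 < k <= n -> 0 < cwF n a k <= n.
Proof. by move=> ha k hk; rewrite /cwF; case: ifP; lia. Qed.
Lemma ccw_range n a : 0 < a <= n -> forall k, 0 < k <= n -> 0 < ccwF n a k <= n.
Proof. by move=> ha k hk; rewrite /ccwF; case: ifP; lia. Qed.

Lemma ccsum n : 4 <= n -> \sum_(1 <= i < n.+1) wcc n i n.-1 * wcc n i n =
  n.+1 + \sum_(1 <= i < n.-1) i.+1 * i.+2.
Proof.
case: n => [|[|[|[|m]]]] // hn /=.
rewrite big_nat_recr /=; last lia.
rewrite big_nat_recr /=; last lia.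
have -> : wcc m.+4 m.+4 m.+3 * wcc m.+4 m.+4 m.+4 = 1.
  by rewrite /wcc !leqnn ltnW.
have -> : wcc m.+4 m.+3 m.+3 * wcc m.+4 m.+3 m.+4 = m.+4.
  by rewrite /wcc leqnn ltnn eqxx mul1n.
rewrite (@eq_big_nat _ _ _ 1 m.+3 _ (fun i => i.+1 * i.+2)); first lia.
move=> i hi; rewrite /wcc.
have -> : (m.+2 < i) = false by lia.
have -> : (m.+3 < i) = false by lia.
have -> : (m.+3 == m.+4) = false by lia.
by rewrite (_ : m.+4.-1 = m.+3) // !eqxx mulnC.
Qed.

Lemma cwsum1 n : 4 <= n -> \sum_(1 <= i < 4) H i * (n.+1 - i)`! =
  \sum_(1 <= i < 4) (n.+1 - i)`! * (i.-1)`!.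
Proof.
move=> hn; apply: eq_big_nat => i hi; rewrite mulnC; congr (_ * _).
case: i hi => [|[|[|[|i]]]] // _; rewrite /H /index_iota /= ?big_cons ?big_nil //.
Qed.

Lemma cwsum2 n : \sum_(4 <= i < n.+1) H i * (n.+1 - i)`! =
  \sum_(4 <= i < n.+1) (((n - i).+1)`! * i`!) %/ 3.
Proof.
apply: eq_big_nat => i hi.
rewrite (_ : (n - i).+1 = n.+1 - i); last lia.
rewrite -(@H3 i); last lia.
by rewrite mulnCA mulKn // mulnC.
Qed.

Theorem theorem2p10 (n : nat) : 4 <= n ->
  #|FPF (cycle_adj n) n| =
    n.+1
    + \sum_(1 <= i < n.-1) (i.+1 * i.+2)
    + \sum_(1 <= i < 4) ((n.+1 - i)`! * (i.-1)`!)
    + \sum_(4 <= i < n.+1) (((n - i).+1)`! * i`!) %/ 3.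
Proof.
move=> hn.
rewrite card_FPF (eq_bigr _ (fun t _ => split_run' t hn)) big_split /=.
rewrite exchange_big [X in _ + X]exchange_big /=.
rewrite (@eq_big_nat _ _ _ 1 n.+1 _ (fun a => H a * (n.+1 - a)`!)); last first.
  move=> a ha; rewrite W_seqF; last exact: cw_range.
  rewrite -Pcw //; apply: eq_big_nat => j hj; apply: wj_cw => //.
rewrite [X in _ + X](@eq_big_nat _ _ _ 1 n.+1 _ (fun b => wcc n b n.-1 * wcc n b n)); last first.
  move=> b hb; rewrite W_seqF; last exact: ccw_range.
  rewrite -Pcc //; apply: eq_big_nat => j hj; apply: wj_ccw => //.
rewrite (@big_cat_nat _ _ _ 4 1 n.+1) //=; last lia.
rewrite cwsum1 // cwsum2 ccsum //; lia.
Qed.
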